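(* Let $(\Gamma,\rho)$ be a rooted voltage graph with finite voltage group $G$, let $V_r$ be the set of roots of $\Gamma$, and let $(\Gamma_r,\rho_r)$ be the voltage graph induced by $V_r$ (i.e. $\Gamma_r$ is the subgraph of $\Gamma$ induced by $V_r$ and $\rho_r$ the restriction of $\rho$ to its edges). Then for every $v_i\in V_r$, the local group of $(\Gamma_r,\rho_r)$ at $v_i$ equals the directed local group $G_i^*$ of $(\Gamma,\rho)$ at $v_i$.
   Context: $\Gamma=(V,E)$ simple digraph, $e_{ij}$ the edge $v_i\to v_j$, $\rho:E\to G$. Semi-walk $w=v_{i_1}a_1\dots a_{n-1}v_{i_n}$ with each $a_j\in\{e_{i_ji_{j+1}},e_{i_{j+1}i_j}\}$; walk if all $a_j=e_{i_ji_{j+1}}$; closed if $v_{i_1}=v_{i_n}$; path: walk with distinct vertices. Net voltage $f(w)=\bar\rho(a_1)\cdots\bar\rho(a_{n-1})$ with $\bar\rho(a_j)=\rho(a_j)$ for forward and $\rho(a_j)^{-1}$ for backward edges ($f=\mathbf 1$ on a single vertex). The local group of a voltage graph at $v_i$ is $\{f(w): w$ closed semi-walk at $v_i$ in that graph$\}$; the directed local group $G_i^*$ of $(\Gamma,\rho)$ is $\{f(w): w$ closed walk in $\Gamma$ at $v_i\}$. A root of $\Gamma$ is a vertex reachable by a path from every vertex; $\Gamma$ is rooted if it has a root. The induced subgraph on $V_r$ contains exactly the edges of $\Gamma$ between vertices of $V_r$. *)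

(* Defs.v *)
From Stdlib Require Import ClassicalEpsilon.
From mathcomp Require Import all_boot all_fingroup.
Set Implicit Arguments. Unset Strict Implicit. Unset Printing Implicit Defensive.
Local Open Scope group_scope.

(* A digraph on a finite vertex type V is an edge relation E : rel V;
   E x y means the edge e_{xy} : x -> y is present.  In a simple digraph
   there is at most one edge x -> y, so an edge is determined by its ends.
   A voltage assignment is rho : V -> V -> gT (only its values on edges
   matter).

   A semi-walk starting at x is encoded by its sequence of steps
   (y, b) : V * bool, where y is the next vertex and b = true means the
   step traverses the forward edge e_{cur,y}, b = false means it traverses
   the edge e_{y,cur} backwards. *)

Section VoltageGraphs.
Variables (V : finType) (gT : finGroupType).

Fixpoint semiwalk (E : rel V) (x : V) (s : seq (V * bool)) : bool :=
  match s with
  | [::] => true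
  | (y, b) :: s' => (if b then E x y else E y x) && semiwalk E y s'
  end.

Fixpoint net_voltage (rho : V -> V -> gT) (x : V) (s : seq (V * bool)) : gT :=
  match s with
  | [::] => 1
  | (y, b) :: s' => (if b then rho x y else (rho y x)^-1) * net_voltage rho y s'
  end.

Definition sw_end (x : V) (s : seq (V * bool)) : V := last x (map fst s).

Definition is_walk (E : rel V) (x : V) (s : seq (V * bool)) : bool :=
  semiwalk E x s && all snd s.

Definition local_group (E : rel V) (rho : V -> V -> gT) (v : V) (g : gT) : Prop :=
  exists s, [/\ semiwalk E v s, sw_end v s = v & net_voltage rho v s = g].

Definition directed_local_group (E : rel V) (rho : V -> V -> gT) (v : V) (g : gT)
  : Prop :=
  exists s, [/\ is_walk E v s, sw_end v s = v & net_voltage rho v s = g].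

Definition path_to (E : rel V) (x r : V) : Prop :=
  exists p : seq V, [/\ path E x p, last x p = r & uniq (x :: p)].

Definition is_root (E : rel V) (r : V) : Prop := forall x, path_to E x r.

Definition rooted (E : rel V) : Prop := exists r, is_root E r.

Definition root_set (E : rel V) : pred V := fun r =>
  if excluded_middle_informative (is_root E r) then true else false.
Definition induced (E : rel V) (A : pred V) : rel V :=
  fun x y => [&& E x y, A x & A y].

End VoltageGraphs.

(* Main.v *)
Require Import Defs.
From Stdlib Require Import ClassicalEpsilon.
From mathcomp Require Import all_boot all_fingroup.
Set Implicit Arguments. Unset Strict Implicit. Unset Printing Implicit Defensive.

Section Aux.
Variables (V : finType) (gT : finGroupType) (E : rel V) (rho : V -> V -> gT).
Local Open Scope group_scope.

Lemma root_setP r : root_set E r = true <-> is_root E r.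
Proof. rewrite /root_set; case: excluded_middle_informative => //. Qed.

Lemma path_to_connect x r : path_to E x r <-> connect E x r.
Proof.
split.
  by case=> p [Hp Hl _]; apply/connectP; exists p.
move/connectP=> [p Hp ->].
case: (shortenP Hp) => p' Hp' Hu _.
by exists p'.
Qed.

Lemma root_reach r u : is_root E r -> connect E r u -> is_root E u.
Proof.
move=> Hr Hru x; apply/path_to_connect.
apply: connect_trans (Hru); apply/path_to_connect; exact: Hr.
Qed.

Definition fw (p : seq V) := map (fun y => (y, true)) p.

Lemma fw_walk x p : is_walk E x (fw p) = path E x p.
Proof.
rewrite /is_walk; elim: p x => [|y p IH] x //=.
by rewrite -IH andbA.
Qed.

Lemma fw_end x p : sw_end x (fw p) = last x p.
Proof. by rewrite /sw_end /fw -map_comp map_id. Qed.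

Lemma sw_cat x s1 s2 : semiwalk E x (s1 ++ s2) =
  semiwalk E x s1 && semiwalk E (sw_end x s1) s2.
Proof.
rewrite /sw_end; elim: s1 x => [|[y b] s1 IH] x //=.
by rewrite IH andbA.
Qed.

Lemma walk_cat x s1 s2 : is_walk E x s1 -> is_walk E (sw_end x s1) s2 ->
  is_walk E x (s1 ++ s2).
Proof.
rewrite /is_walk sw_cat all_cat => /andP[-> ->] /andP[-> ->] //.
Qed.

Lemma end_cat (x : V) (s1 s2 : seq (V * bool)) : sw_end x (s1 ++ s2) = sw_end (sw_end x s1) s2.
Proof. by rewrite /sw_end map_cat last_cat. Qed.

Lemma nv_cat x s1 s2 : net_voltage rho x (s1 ++ s2) =
  net_voltage rho x s1 * net_voltage rho (sw_end x s1) s2.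
Proof.
rewrite /sw_end; elim: s1 x => [|[y b] s1 IH] x /=; first by rewrite mul1g.
by rewrite IH mulgA.
Qed.

Fixpoint rep (n : nat) (c : seq (V * bool)) :=
  if n is n'.+1 then c ++ rep n' c else [::].

Lemma rep_spec x c n : is_walk E x c -> sw_end x c = x ->
  [/\ is_walk E x (rep n c), sw_end x (rep n c) = x &
      net_voltage rho x (rep n c) = net_voltage rho x c ^+ n].
Proof.
move=> Hc He; elim: n => [|n [IH1 IH2 IH3]] /=.
  by split => //; rewrite /is_walk.
split.
- by apply: walk_cat => //; rewrite He.
- by rewrite end_cat He.
- by rewrite nv_cat He IH3 expgS.
Qed.

Lemma back_step x y : E y x -> is_root E y ->
  exists t, [/\ is_walk E x t, sw_end x t = y & net_voltage rho x t = (rho y x)^-1].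
Proof.
move=> Eyx Hy.
case: (Hy x) => p [Hp Hl _].
set P := fw p.
have HP : is_walk E x P by rewrite fw_walk.
have HPe : sw_end x P = y by rewrite fw_end.
set C := P ++ [:: (x, true)].
have HC : is_walk E x C.
  apply: walk_cat => //; rewrite HPe /is_walk /= Eyx //.
have HCe : sw_end x C = x by rewrite end_cat HPe.
set c := net_voltage rho x C.
have Hc : c = net_voltage rho x P * rho y x by rewrite /c nv_cat HPe /= mulg1.
case: (rep_spec (#[c]).-1 HC HCe) => H1 H2 H3.
exists (rep (#[c]).-1 C ++ P); split.
- by apply: walk_cat => //; rewrite H2.
- by rewrite end_cat H2.
- rewrite nv_cat H2 H3 -/c.
  have Hinv : c ^+ (#[c]).-1 = c^-1.
    apply: (mulIg c); rewrite mulVg -expgSr prednK ?order_gt0 //.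
    exact: expg_order.
  by rewrite Hinv Hc invMg -mulgA mulVg mulg1.
Qed.

Lemma semi_to_walk x s : semiwalk (induced E (root_set E)) x s ->
  exists t, [/\ is_walk E x t, sw_end x t = sw_end x s &
                net_voltage rho x t = net_voltage rho x s].
Proof.
elim: s x => [|[y b] s IH] x /=.
  by move=> _; exists [::]; split => //; rewrite /is_walk.
move=> /andP[He Hs].
case: (IH y Hs) => t [Ht1 Ht2 Ht3].
case: b He => /= /and3P[Exy Rx Ry].
  exists ((y, true) :: t); split => //=.
  - by rewrite /is_walk /= Exy; move: Ht1; rewrite /is_walk => /andP[-> ->].
  - by move: Ht3 => ->.
have Hy : is_root E y by apply/root_setP.
case: (back_step Exy Hy) => w [Hw1 Hw2 Hw3].
exists (w ++ t); split.
- by apply: walk_cat; rewrite ?Hw2.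
- by rewrite end_cat Hw2.
- by rewrite nv_cat Hw2 Hw3 Ht3.
Qed.

End Aux.

Theorem lemma8 (V : finType) (gT : finGroupType) (E : rel V)
  (rho : V -> V -> gT) :
  irreflexive E ->
  rooted E ->
  forall v : V, is_root E v ->
  forall g : gT,
    local_group (induced E (root_set E)) rho v g <-> directed_local_group E rho v g.
Proof.
move=> _ _ v Hv g; split.
  case=> s [Hs He Hg].
  case: (semi_to_walk rho Hs) => t [H1 H2 H3].
  by exists t; split => //; rewrite ?H2 ?H3.
case=> s [Hs He Hg].
have Hsf : s = fw (map fst s).
  move: Hs; rewrite /is_walk => /andP[_]; rewrite /fw -map_comp.
  elim: s {He Hg} => [|[y b] s IH] //= /andP[/= -> Ha]; by rewrite -IH.
have Hp : path E v (map fst s) by rewrite -fw_walk -Hsf.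
exists s; split => //.
rewrite Hsf.
suff : path (induced E (root_set E)) v (map fst s).
  by rewrite -fw_walk /is_walk => /andP[].
apply: (sub_in_path (P := root_set E)); last exact: Hp.
  by move=> x y Rx Ry Exy; apply/and3P; split.
apply/allP => u Hu; apply/root_setP.
apply: (root_reach Hv); exact: path_connect Hp u Hu.
Qed.
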